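(* Let $n\ge 1$ be an integer and let $M_{8n}=\langle a,b : a^4=b^{2n}=1,\ bab^{-1}=a^{-1}\rangle$ be the metacyclic group of order $8n$. Let $\Gamma_{M_{8n}}$ be its non-commuting graph. Then the spectrum of the distance signless Laplacian matrix $D^Q(\Gamma_{M_{8n}})$ (eigenvalues counted with multiplicity, multiplicities being added if two of the listed values coincide) consists of: (a) $8n-4$ with multiplicity $3(2n-1)$; (b) $10n-4$ with multiplicity $2$; (c) $16n-4$ with multiplicity $1$.
   Context: For a finite non-abelian group $G$ with centre $Z(G)$, the non-commuting graph $\Gamma_G$ is the simple undirected graph with vertex set $G\setminus Z(G)$, in which two distinct vertices $u,v$ are adjacent if and only if $uv\ne vu$. For a connected graph $H$, $d_{uv}$ denotes the length of a shortest path between $u$ and $v$; the distance matrix $D(H)$ has $(u,v)$-entry $d_{uv}$. The transmission of a vertex $v$ is $\sum_{u} d_{uv}$, and $Tr(H)$ is the diagonal matrix of vertex transmissions. The distance signless Laplacian matrix is $D^Q(H)=Tr(H)+D(H)$. *)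

(* Defs.v *)
From mathcomp Require Import all_boot all_order all_algebra all_fingroup all_solvable.
Set Implicit Arguments. Unset Strict Implicit. Unset Printing Implicit Defensive.
Import GRing.Theory.
Local Open Scope ring_scope.

Section GraphMatrices.
Variables (T : finType) (V : {set T}) (e : rel T).

Fixpoint walkb (k : nat) (u v : T) : bool :=
  if k is k'.+1 then [exists w in V, e u w && walkb k' w v] else u == v.

(* graph distance: least k with a k-step walk (searched in 0..#|V|-1, which
   suffices for a connected graph on V) *)
Definition gdist (u v : T) : nat := find (fun k => walkb k u v) (iota 0 #|V|).

Definition dist_mx : 'M[int]_#|V| :=
  \matrix_(i, j) (gdist (enum_val i) (enum_val j))%:Z.

Definition trans_mx : 'M[int]_#|V| :=
  diag_mx (\row_(j < #|V|) \sum_(i < #|V|) dist_mx i j).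

Definition dsl_mx : 'M[int]_#|V| := trans_mx + dist_mx.
End GraphMatrices.

Definition nc_vertices (gT : finGroupType) (G : {group gT}) : {set gT} :=
  (G :\: 'Z(G))%g.
Definition nc_adj (gT : finGroupType) : rel gT :=
  fun x y => (x != y) && (x * y != y * x)%g.

(* Main.v *)
Require Import Defs.
From mathcomp Require Import all_boot all_order all_algebra all_fingroup all_solvable.
Import GRing.Theory.
From mathcomp Require Import zify ring.
Set Implicit Arguments. Unset Strict Implicit. Unset Printing Implicit Defensive.

Section Mx.
Local Open Scope ring_scope.
Import GRing.Theory.

Lemma det_mx33 (R : comNzRingType) (A : 'M[R]_3) :
  \det A = A 0 0 * (A 1 1 * A 2%:R 2%:R - A 1 2%:R * A 2%:R 1)
         - A 0 1 * (A 1 0 * A 2%:R 2%:R - A 1 2%:R * A 2%:R 0)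
         + A 0 2%:R * (A 1 0 * A 2%:R 1 - A 1 1 * A 2%:R 0).
Proof.
rewrite (expand_det_row _ 0) !big_ord_recl big_ord0 /cofactor.
rewrite !(expand_det_row _ 0) !big_ord_recl !big_ord0 /cofactor.
rewrite !det_mx11 !mxE /=.
have E: forall i j : 'I_3, A i j = A (inord (val i)) (inord (val j)) by move=> i j; rewrite !inord_val.
rewrite !(E (lift _ _)) !(E _ (lift _ _)) !(E 0) !(E 1) !(E 2%:R) /=.
rewrite !expr0 !expr1. 
ring.
Qed.

Lemma sylv (R : comNzRingType) N k (U : 'M[R]_(N,k)) (V : 'M[R]_(k,N)) (Y : R) :
  \det (Y%:M - U *m V) * Y ^+ k = Y ^+ N * \det (Y%:M - V *m U).
Proof.
pose M := block_mx (Y%:M : 'M_N) U V (1%:M : 'M_k).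
have E1 : M = block_mx 1%:M U 0 1%:M *m block_mx (Y%:M - U *m V) 0 V 1%:M.
  rewrite mulmx_block !mul1mx !mul0mx !mulmx1 subrK. rewrite /M; congr block_mx; by rewrite add0r.
have E2 : block_mx 1%:M 0 (- V) (Y%:M) *m M = block_mx (Y%:M) U 0 (Y%:M - V *m U).
  rewrite mulmx_block !mul1mx !mul0mx; congr block_mx.
  - by rewrite addr0.
  - by rewrite addr0.
  - by rewrite mulNmx mul_mx_scalar mul_scalar_mx addNr.
  - by rewrite mulmx1 addrC mulNmx.
have := congr1 determinant E2.
rewrite det_mulmx det_lblock det_ublock det1 mul1r !det_scalar E1 det_mulmx.
rewrite det_ublock det_lblock !det1 !mul1r mulr1 mulrC => ->.
by [].
Qed.
End Mx.

Section Grp.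
Variables (gT : finGroupType) (G : {group gT}) (a b : gT) (n : nat).
Hypotheses (n1 : (1 <= n)%N) (hG : (G :=: <<[set a; b]>>)%g)
  (a4 : (a ^+ 4 = 1)%g) (b2n : (b ^+ (2 * n) = 1)%g) (hba : (b * a * b^-1 = a^-1)%g)
  (cG : #|G| = (8 * n)%N).
Local Open Scope group_scope.

Let Z := 'Z(G).

Lemma aG : a \in G. Proof. by rewrite hG mem_gen // !inE eqxx. Qed.
Lemma bG : b \in G. Proof. by rewrite hG mem_gen // !inE eqxx orbT. Qed.

Lemma aJb : a ^ b = a^-1.
Proof.
have h : (a^-1) ^ b = a.
  by rewrite -hba conjgE !mulgA mulVg mul1g mulgKV.
by rewrite -{1}(invgK a) conjVg h.
Qed.

Lemma commJ (x y : gT) : commute x y <-> x ^ y = x.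
Proof.
rewrite conjgE; split => [h|h]; first by rewrite h mulKg.
by rewrite /commute -{2}h mulKVg.
Qed.

Lemma inZ (x : gT) : x \in G -> commute x a -> commute x b -> x \in Z.
Proof.
move=> xG ca cb; apply/centerP; split => // y.
rewrite hG => yG.
have: <<[set a; b]>> \subset 'C[x].
  rewrite gen_subG; apply/subsetP => z /set2P[]->;
  by apply/cent1P/commute_sym.
by move/subsetP/(_ y yG)/cent1P.
Qed.

Lemma Zcomm (z x : gT) : z \in Z -> x \in G -> commute z x.
Proof. by move=> /centerP[_ h] /h. Qed.

Lemma a2Z : a ^+ 2 \in Z.
Proof.
apply: inZ; first by rewrite groupX // aG.
  exact/commute_sym/commuteX.
apply/commJ; rewrite conjXg aJb.
apply/eqP; rewrite expVgn eq_invg_mul -expgD. exact/eqP.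
Qed.

Lemma b2Z : b ^+ 2 \in Z.
Proof.
apply: inZ; first by rewrite groupX // bG.
  apply/commute_sym/commJ; by rewrite expgS expg1 conjgM aJb conjVg aJb invgK.
exact/commute_sym/commuteX.
Qed.

Lemma Gsub : G \subset <[a]> * <[b]>.
Proof.
rewrite -norm_joinEr; last first.
  by rewrite cycle_subG; apply/normP; rewrite -cycleJ aJb cycleV.
rewrite hG gen_subG; apply/subsetP => z /set2P[]->.
  by apply: (subsetP (joing_subl _ _)); exact: cycle_id.
by apply: (subsetP (joing_subr _ _)); exact: cycle_id.
Qed.


Lemma cardle : (#|G| <= #[a] * #[b])%N.
Proof.
apply: leq_trans (subset_leq_card Gsub) _.
have := mul_cardG <[a]> <[b]>.
rewrite /order => ->.
by rewrite leq_pmulr // (cardG_gt0 (<[a]> :&: <[b]>)%G).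
Qed.

Lemma a2n1 : a ^+ 2 != 1.
Proof.
apply/eqP => h.
have ha : (#[a] <= 2)%N by apply: dvdn_leq => //; rewrite order_dvdn h.
have hb : (#[b] <= 2 * n)%N by apply: dvdn_leq; [lia | rewrite order_dvdn b2n].
have := cardle; rewrite cG => h2.
have := leq_trans h2 (leq_mul ha hb). lia.
Qed.

Lemma nab : ~ commute a b.
Proof.
move/commJ; rewrite aJb => h; move: a2n1.
by rewrite expgS expg1 -{1}h mulVg eqxx.
Qed.

Lemma decomp x : x \in G -> exists r s : bool, (a ^+ r * b ^+ s)^-1 * x \in Z.
Proof.
move/(subsetP Gsub)/mulsgP => [y z /cycleP[i ->] /cycleP[j ->] ->].
exists (odd i), (odd j).
have ZG : Z \subset G by apply: center_sub.
have [e1 e2] : (a ^+ i = (a ^+ 2) ^+ (i %/ 2) * a ^+ odd i) /\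
                (b ^+ j = (b ^+ 2) ^+ (j %/ 2) * b ^+ odd j).
  by rewrite -!expgM -!expgD -!modn2 ![(2 * _)%N]mulnC -!divn_eq.
have z1Z : (a ^+ 2) ^+ (i %/ 2) \in Z by rewrite groupX // a2Z.
have z2Z : (b ^+ 2) ^+ (j %/ 2) \in Z by rewrite groupX // b2Z.
rewrite e1 e2.
set z1 := (a ^+ 2) ^+ _ in z1Z *; set z2 := (b ^+ 2) ^+ _ in z2Z *.
have -> : z1 * a ^+ odd i * (z2 * b ^+ odd j) = (a ^+ odd i * b ^+ odd j) * (z1 * z2).
  rewrite (Zcomm z1Z (groupX _ aG)) (Zcomm z2Z (groupX _ bG)).
  rewrite -!mulgA; congr (_ * _); rewrite !mulgA; congr (_ * _).
  by rewrite (Zcomm z1Z (groupX _ bG)).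
by rewrite mulKg groupM.
Qed.


Lemma commZ s t z w : s \in G -> t \in G -> z \in Z -> w \in Z ->
  commute (s * z) (t * w) <-> commute s t.
Proof.
move=> sG tG zZ wZ.
have zG : z \in G by apply: (subsetP (center_sub G)).
have E1 : s * z * (t * w) = s * t * (z * w).
  by rewrite mulgA -(mulgA s z t) (Zcomm zZ tG) !mulgA.
have E2 : t * w * (s * z) = t * s * (z * w).
  by rewrite mulgA -(mulgA t w s) (Zcomm wZ sG) !mulgA -(mulgA _ w z) (Zcomm wZ zG) mulgA.
rewrite /commute E1 E2; split => [/mulIg|->] //.
Qed.

Definition rep (c : 'I_3) : gT := if val c == 0%N then a else if val c == 1%N then b else a * b.

Lemma repG c : rep c \in G.
Proof. by rewrite /rep; case: ifP => _; [|case: ifP => _]; rewrite ?groupM ?aG ?bG. Qed.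

Lemma n_a_ab : ~ commute a (a * b).
Proof. by rewrite /commute -mulgA => /mulgI h; apply: nab. Qed.

Lemma n_b_ab : ~ commute b (a * b).
Proof. by rewrite /commute mulgA => /mulIg h; apply: nab. Qed.

Lemma rep_comm c d : commute (rep c) (rep d) <-> c = d.
Proof.
split => [|-> //]; rewrite /rep.
case: c d => [[|[|[|?]]] ?] [[|[|[|?]]] ?] //= h; try (by apply: val_inj);
  exfalso; move: h.
- exact: nab.
- exact: n_a_ab.
- by move/commute_sym; apply: nab.
- exact: n_b_ab.
- by move/commute_sym; apply: n_a_ab.
- by move/commute_sym; apply: n_b_ab.
Qed.

Definition cls (x : gT) : 'I_3 :=
  if a^-1 * x \in Z then inord 0 else if b^-1 * x \in Z then inord 1 else inord 2.

Lemma clsP x : x \in G -> x \notin Z -> (rep (cls x))^-1 * x \in Z.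
Proof.
move=> xG xZ; rewrite /cls.
have [r [s]] := decomp xG.
case: ifP => [h _|h1]; first by rewrite /rep /= inordK.
case: ifP => [h _|h2]; first by rewrite /rep /= inordK.
rewrite /rep /= inordK //=.
by case: r; case: s; rewrite ?expg0 ?expg1 ?mulg1 ?mul1g ?invg1 ?mul1g ?h1 ?h2 ?(negbTE xZ).
Qed.


Let V := (G :\: Z).

Lemma inV x : (x \in V) = (x \in G) && (x \notin Z).
Proof. by rewrite !inE andbC. Qed.

Lemma decV x : x \in V -> x = rep (cls x) * ((rep (cls x))^-1 * x) /\ (rep (cls x))^-1 * x \in Z.
Proof. by rewrite inV => /andP[xG xZ]; rewrite mulKVg; split => //; apply: clsP. Qed.

Lemma cls_comm x y : x \in V -> y \in V -> commute x y <-> cls x = cls y.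
Proof.
move=> /decV [ex zx] /decV [ey zy].
rewrite {1}ex {1}ey commZ ?repG //; exact: rep_comm.
Qed.

Lemma repZ c : rep c \notin Z.
Proof.
apply/negP => /Zcomm h.
pose d : 'I_3 := if val c == 0%N then inord 1 else inord 0.
move: {h}(h (rep d) (repG d)); move/rep_comm; rewrite /d; clear d.
case: c => [[|[|[|?]]] ?] //= /(congr1 val) /=; rewrite inordK //.
Qed.

Lemma repV c : rep c \in V.
Proof. by rewrite inV repG repZ. Qed.

Lemma cls_rep c : cls (rep c) = c.
Proof.
have [e z] := decV (repV c).
apply/rep_comm.
have : commute (rep c) (rep c) by [].
rewrite {1}e -[X in commute _ X]mulg1 commZ ?repG //; exact: group1.
Qed.

Lemma Cset c : [set x in V | cls x == c] = rep c *: Z.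
Proof.
apply/setP => x; rewrite inE mem_lcoset.
apply/andP/idP => [[xV /eqP <-]|h].
  by case: (decV xV).
have ZG : Z \subset G by apply: center_sub.
have xe : x = rep c * ((rep c)^-1 * x) by rewrite mulKVg.
have xG : x \in G by rewrite xe groupM ?repG // (subsetP ZG).
have xV : x \in V.
  rewrite inV xG /=; apply/negP => xZ; have := repZ c.
  have -> : rep c = x * ((rep c)^-1 * x)^-1 by rewrite invMg invgK mulKVg.
  by rewrite groupM // groupV.
split => //; apply/eqP.
have [e z] := decV xV.
apply/rep_comm.
have := commZ (repG (cls x)) (repG c) z h; rewrite -e -xe => H; exact/H.
Qed.

Lemma Ccard c : #|[set x in V | cls x == c]| = #|Z|.
Proof. by rewrite Cset card_lcoset. Qed.



Lemma cardV3 : #|V| = (3 * #|Z|)%N.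
Proof.
rewrite -sum1_card (partition_big cls xpredT) //=.
rewrite (eq_bigr (fun _ => #|Z|)) ?sum_nat_const ?card_ord // => c _.
by rewrite -(Ccard c) -sum1_card; apply: eq_bigl => x; rewrite inE.
Qed.

Lemma cardZ : #|Z| = (2 * n)%N.
Proof.
have ZG : Z \subset G by apply: center_sub.
have : #|V| = (#|G| - #|Z|)%N by rewrite cardsD (setIidPr ZG).
have := subset_leq_card ZG.
rewrite cardV3 cG; lia.
Qed.

Lemma cardV : #|V| = (6 * n)%N.
Proof. rewrite cardV3 cardZ; lia. Qed.


Lemma adjV x y : x \in V -> y \in V -> nc_adj x y = (cls x != cls y).
Proof.
move=> xV yV; rewrite /nc_adj.
case: (eqVneq (cls x) (cls y)) => h /=.
  by have /cls_comm := h; move=> /(_ xV yV) ->; rewrite eqxx andbF.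
have -> : x != y by apply: contra_neq h => ->.
apply/negP => /eqP /(cls_comm xV yV) e; by rewrite e eqxx in h.
Qed.

Lemma walk1 x y : y \in V -> walkb V (@nc_adj gT) 1 x y = nc_adj x y.
Proof.
move=> yV /=; apply/existsP/idP => [[w /and3P[_ h /eqP <-]] //|h].
by exists y; rewrite yV h eqxx.
Qed.

Lemma gdistV x y : x \in V -> y \in V ->
  gdist V (@nc_adj gT) x y = if x == y then 0%N else if cls x == cls y then 2%N else 1%N.
Proof.
move=> xV yV; rewrite /gdist.
have -> : #|V| = (6 * n - 3).+3 by rewrite cardV; lia.
rewrite /= -/(walkb V (@nc_adj gT) 1 x y) walk1 // adjV //.
case: eqP => [//|nxy].
case: eqP => [e|ne] //=.
suff -> : [exists w in V, nc_adj x w && [exists w0 in V, nc_adj w w0 && (w0 == y)]] by [].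
pose d : 'I_3 := if val (cls x) == 0%N then inord 1 else inord 0.
have dn : d != cls x.
  rewrite /d; case: (cls x) => [[|[|[|?]]] ?] //=; apply/eqP => /(congr1 val) /=; rewrite inordK //.
apply/existsP; exists (rep d); have W := walk1 (rep d) yV; simpl in W.
rewrite repV W // !adjV ?repV // cls_rep -e.
by rewrite eq_sym dn.
Qed.


Local Open Scope ring_scope.
Import GRing.Theory.

Lemma ev_eq (i j : 'I_#|V|) : (enum_val i == enum_val j) = (i == j).
Proof. exact: (inj_eq enum_val_inj). Qed.

Lemma dist_entry i j : dist_mx V (@nc_adj gT) i j =
  1 + (cls (enum_val i) == cls (enum_val j))%:R - 2 * (i == j)%:R.
Proof.
rewrite mxE gdistV ?enum_valP // ev_eq.
case: eqP => [->|_]; first by rewrite eqxx.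
by case: eqP.
Qed.

Lemma sum_cls c : \sum_(i < #|V|) ((cls (enum_val i) == c)%:R : int) = (2 * n)%:R.
Proof.
rewrite -natr_sum; congr (_%:R).
rewrite -(big_enum_val (A := pred_of_set V) (fun x => nat_of_bool (cls x == c))) /=.
rewrite -big_mkcondr /= sum1_card -cardZ -(Ccard c).
by apply: eq_card => x; rewrite inE.
Qed.


Lemma sum_delta (j : 'I_#|V|) : \sum_(i < #|V|) ((i == j)%:R : int) = 1.
Proof. by rewrite (bigD1 j) //= eqxx big1 ?addr0 // => k /negbTE ->. Qed.

Lemma trans_entry j : \sum_(i < #|V|) dist_mx V (@nc_adj gT) i j = (8 * n)%:R - 2.
Proof.
under eq_bigr => i _ do rewrite dist_entry.
rewrite sumrB big_split /= sum_cls -mulr_sumr sum_delta sumr_const card_ord cardV.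
rewrite -[_ *+ _]mulr_natr mul1r !natrM; ring.
Qed.

Definition Um : 'M[int]_(#|V|, 3) := \matrix_(i, c) ((cls (enum_val i) == c)%:R).
Definition Vm : 'M[int]_(3, #|V|) := \matrix_(c, j) (1 + (cls (enum_val j) == c)%:R).

Lemma sum3 (c0 : 'I_3) (F : 'I_3 -> int) : \sum_(c < 3) (c0 == c)%:R * F c = F c0.
Proof. by rewrite (bigD1 c0) //= eqxx mul1r big1 ?addr0 // => c; rewrite eq_sym => /negbTE ->; rewrite mul0r. Qed.

Lemma dsl_eq : dsl_mx V (@nc_adj gT) = ((8 * n)%:R - 4)%:M + Um *m Vm.
Proof.
have De : forall i j : 'I_#|V|, ((gdist V (@nc_adj gT) (enum_val i) (enum_val j))%:Z : int) = dist_mx V (@nc_adj gT) i j.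
  by move=> *; rewrite mxE.
apply/matrixP => i j; rewrite !mxE.
rewrite [in RHS](eq_bigr (fun c => (cls (enum_val i) == c)%:R * (1 + (cls (enum_val j) == c)%:R))); last first.
  by move=> c _; rewrite !mxE.
rewrite [in LHS](eq_bigr (fun k => dist_mx V (@nc_adj gT) k i)); last by move=> k _; rewrite mxE.
rewrite De sum3 trans_entry dist_entry.
case: eqP => [->|_]; rewrite ?eqxx /= ?mulr1n ?mulr0n ?(eq_sym (cls (enum_val j))); ring.
Qed.


Lemma VU : Vm *m Um = \matrix_(c, d) ((2 * n)%:R * (1 + (c == d)%:R)).
Proof.
apply/matrixP => c d; rewrite !mxE.
under eq_bigr => j _ do rewrite !mxE mulrDl mul1r.
rewrite big_split /= sum_cls.
case: (eqVneq c d) => [<-|cd].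
  under eq_bigr => j _ do rewrite -natrM mulnb andbb.
  by rewrite sum_cls mulrDr mulr1.
rewrite big1 ?addr0 ?(negbTE cd) ?mulr0 ?addr0 ?mulr1 //; move=> j _.
by case: eqP => [->|_]; [rewrite (negbTE cd) mulr0 | rewrite mul0r].
Qed.


Lemma final : char_poly (dsl_mx V (@nc_adj gT)) =
    (('X - ((8 * n - 4)%N%:R : int)%:P) ^+ (3 * (2 * n - 1)) *
     ('X - ((10 * n - 4)%N%:R : int)%:P) ^+ 2 *
     ('X - ((16 * n - 4)%N%:R : int)%:P)).
Proof.
set Y := 'X - ((8 * n - 4)%N%:R : int)%:P.
have cst : ((8 * n)%:R - 4 : int) = (8 * n - 4)%N%:R by rewrite natrB //; lia.
have E : char_poly_mx (dsl_mx V (@nc_adj gT)) = Y%:M - map_mx polyC Um *m map_mx polyC Vm.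
  rewrite /char_poly_mx dsl_eq cst map_mxD map_mxM /= map_scalar_mx opprD addrA.
  congr (_ - _); apply/matrixP => i j; rewrite !mxE.
  by case: (i == j); rewrite ?mulr1n ?mulr0n ?subr0.
have S := sylv (map_mx polyC Um) (map_mx polyC Vm) Y.
rewrite -[map_mx polyC Vm *m _]map_mxM VU in S.
have det3 : \det (Y%:M - map_mx polyC (\matrix_(c, d) ((2 * n)%:R * (1 + (c == d)%:R)) : 'M[int]_3))
   = (Y - ((2 * n)%:R)%:P) ^+ 2 * (Y - ((8 * n)%:R)%:P).
  rewrite det_mx33 !mxE /=.
  rewrite ?mulr1n ?mulr0n !polyCM ?polyCD ?polyC1 ?polyC0 !polyC_natr !natrM; ring.
apply: (@mulIf _ (Y ^+ 3)); first by rewrite expf_neq0 // polyXsubC_eq0.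
rewrite /char_poly E S det3 cardV.
have -> : (6 * n)%N = (3 * (2 * n - 1) + 3)%N by lia.
have h10 : ('X - ((10 * n - 4)%N%:R : int)%:P) = Y - ((2 * n)%:R)%:P.
  by rewrite /Y -addrA -opprD -polyCD -natrD; congr ('X - (_%:R)%:P); lia.
have h16 : ('X - ((16 * n - 4)%N%:R : int)%:P) = Y - ((8 * n)%:R)%:P.
  by rewrite /Y -addrA -opprD -polyCD -natrD; congr ('X - (_%:R)%:P); lia.
rewrite h10 h16 exprD.
set P := Y ^+ (3 * (2 * n - 1)).
ring.
Qed.

End Grp.

Unset Implicit Arguments.
Set Strict Implicit.

Theorem theorem6p6 (gT : finGroupType) (G : {group gT}) (a b : gT) (n : nat) :
  (1 <= n)%N ->
  (G :=: <<[set a; b]>>)%g ->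
  (a ^+ 4 = 1)%g -> (b ^+ (2 * n) = 1)%g -> (b * a * b^-1 = a^-1)%g ->
  #|G| = (8 * n)%N ->
  char_poly (dsl_mx (nc_vertices G) (@nc_adj gT)) =
    (('X - ((8 * n - 4)%N%:R : int)%:P) ^+ (3 * (2 * n - 1)) *
     ('X - ((10 * n - 4)%N%:R : int)%:P) ^+ 2 *
     ('X - ((16 * n - 4)%N%:R : int)%:P))%R.
Proof. move=> n1 hG a4 b2n hba cG; exact: (final n1 hG a4 b2n hba cG). Qed.
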